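(* Let $\mathcal G$ be a core network with input nodes $\iota_1,\dots,\iota_n$ and output node $o$, and let $B_j$ be an appendage homeostasis block of $\langle H\rangle$, with associated subnetwork $\mathcal K_j$. Then: (a) each node in $\mathcal K_j$ is an absolutely appendage node; (b) for every $m=1,\dots,n$ and every $\iota_mo$-simple path $S$, nodes in $\mathcal K_j$ are not $CS$-path equivalent to any node in $CS\setminus\mathcal K_j$; (c) $\mathcal K_j$ is a path component of $\mathcal A_{\mathcal G}$.
   Context: Node $b$ is downstream from $a$ (and $a$ upstream from $b$) if there is a directed path from $a$ to $b$ (every node is up/downstream from itself). A core network: every node is upstream from $o$ and downstream from at least one input node. A simple path visits each node at most once; an $\iota_mo$-simple path is a simple path from $\iota_m$ to $o$. A node is $\iota_m$-simple if it lies on an $\iota_mo$-simple path, and $\iota_m$-appendage if it is downstream from $\iota_m$ but not $\iota_m$-simple; it is absolutely appendage if it is $\iota_m$-appendage for every $m$. $\mathcal A_{\mathcal G}$ is the subnetwork of all absolutely appendage nodes with all arrows of $\mathcal G$ between them. For a subnetwork $\mathcal K$, nodes $a,b$ are $\mathcal K$-path equivalent if there are paths within $\mathcal K$ from $a$ to $b$ and from $b$ to $a$; a $\mathcal K$-path component is an equivalence class. For an $\iota_mo$-simple path $S$, $CS$ is the subnetwork of all nodes of $\mathcal G$ not on $S$ with all arrows of $\mathcal G$ between them. An admissible system has variables $x_j$ per node with $\dot x_{\iota_m}=f_{\iota_m}(X,\mathcal I)$, $\dot x_j=f_j(X)$ otherwise, $f_{j,x_\ell}=\partial f_j/\partial x_\ell\equiv0$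 unless there is an arrow $\ell\to j$ (all nodes self-coupled), $f_{\iota_m,\mathcal I}\neq0$; these entries are treated as independent indeterminates. $J_{\mathcal K}=(f_{j,x_\ell})_{j,\ell\in\mathcal K}$. $\langle H\rangle$ is the Jacobian over all nodes (output last) with last column replaced by $(-f_{\iota_m,\mathcal I}$ in row $\iota_m$, $0$ elsewhere$)$. By Frobenius–König theory, $P\langle H\rangle Q$ is block upper triangular with square fully indecomposable diagonal blocks (irreducible determinants) for suitable permutation matrices $P,Q$. A diagonal block of order $k$ containing no $f_{\iota_m,\mathcal I}$ and exactly $k$ self-coupling entries $f_{\ell,x_\ell}$ is an appendage homeostasis block; such a block, after permuting rows and columns, equals $J_{\mathcal K}$ for the set $\mathcal K$ of nodes indexing its rows, which is its associated subnetwork. *)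

(* Defs.v *)
From mathcomp Require Import all_boot.
From mathcomp Require Import boolp.
Set Implicit Arguments. Unset Strict Implicit. Unset Printing Implicit Defensive.

(* A network: nodes form a finite type T; [e l j] means there is an arrow l -> j.
   Inputs iota : 'I_n -> T (iota m is the node iota_{m+1}), output node o.
   All nodes are self-coupled (the Jacobian always has f_{j,x_j}). *)

Section Network.
Variables (T : finType) (e : rel T) (n : nat) (iota : 'I_n -> T) (o : T).

(* b is downstream from a (reflexive: every node is downstream from itself). *)
Definition downstream (a b : T) : bool := connect e a b.

Definition core_network : Prop :=
  forall x : T, downstream x o /\ exists m : 'I_n, downstream (iota m) x.

Definition simple_path (m : 'I_n) (s : seq T) : bool :=
  [&& path e (iota m) s, last (iota m) s == o & uniq (iota m :: s)].

Definition on_path (m : 'I_n) (s : seq T) (x : T) : bool := x \in iota m :: s.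

Definition simple_node (m : 'I_n) (x : T) : Prop :=
  exists s, simple_path m s /\ on_path m s x.

Definition appendage_node (m : 'I_n) (x : T) : Prop :=
  downstream (iota m) x /\ ~ simple_node m x.

Definition absolutely_appendage (x : T) : Prop :=
  forall m : 'I_n, appendage_node m x.

(* Subnetworks are given by their node sets, carrying all arrows of G between
   them.  Arrows of the subnetwork K: *)
Definition sub_rel (K : {set T}) : rel T :=
  [rel a b | [&& e a b, a \in K & b \in K]].

Definition path_equiv (K : {set T}) (a b : T) : Prop :=
  [/\ a \in K, b \in K, connect (sub_rel K) a b & connect (sub_rel K) b a].

Definition path_component (K P : {set T}) : Prop :=
  exists2 a, a \in K & P = [set b | `[< path_equiv K a b >]].

Definition AG : {set T} := [set x | `[< absolutely_appendage x >]].

Definition CS (m : 'I_n) (s : seq T) : {set T} := [set x | x \notin iota m :: s].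

(* Entries of <H>, as the independent indeterminates they are: *)
Inductive entry :=
| EZero
| Ef of T & T                 (* f_{j, x_l}  *)
| EI of 'I_n.                 (* - f_{iota_m, I} *)

Definition nonzero (a : entry) : bool := if a is EZero then false else true.
Definition is_input_entry (a : entry) : bool := if a is EI _ then true else false.
Definition is_self_entry (a : entry) : bool :=
  if a is Ef j l then j == l else false.

(* <H>: rows and columns indexed by nodes; the column of the output node o is
   replaced by (-f_{iota_m,I} in row iota_m, 0 elsewhere). *)
Definition hH (j l : T) : entry :=
  if l == o then
    (if [pick m | iota m == j] is Some m then EI m else EZero)
  else if (j == l) || e l j then Ef j l else EZero.

(* A square submatrix of <H> given by its row set R and column set C
   (the order of rows/columns inside the block is irrelevant below). *)
Definition fully_indecomposable (R C : {set T}) : Prop :=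
  [/\ #|R| = #|C|, 0 < #|R|,
      #|R| = 1 -> exists r c, [/\ r \in R, c \in C & nonzero (hH r c)]
    & forall R' C' : {set T}, R' \subset R -> C' \subset C ->
        0 < #|R'| < #|R| -> #|R'| + #|C'| = #|R| ->
        exists r c, [/\ r \in R', c \in C' & nonzero (hH r c)]].

(* Frobenius--Koenig form: permutations P, Q such that P<H>Q is block upper
   triangular with square fully indecomposable diagonal blocks.  Equivalently
   (and this is what the permutations literally produce), an ordered list of
   diagonal blocks (R_i, C_i), the R_i partitioning the rows and the C_i the
   columns, with the blocks below the diagonal (rows of R_i, columns of C_l,
   l < i) identically zero. *)
Definition FK_decomposition (bs : seq ({set T} * {set T})) : Prop :=
  [/\ forall r : T, count (fun b : {set T} * {set T} => r \in b.1) bs = 1,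
      forall c : T, count (fun b : {set T} * {set T} => c \in b.2) bs = 1,
      forall b, b \in bs -> fully_indecomposable b.1 b.2
    & forall i l, l < i < size bs ->
        forall r c, r \in (nth (set0, set0) bs i).1 ->
                    c \in (nth (set0, set0) bs l).2 -> hH r c = EZero].

Definition appendage_block (R C : {set T}) : Prop :=
  (forall r c, r \in R -> c \in C -> ~~ is_input_entry (hH r c)) /\
  #|[set p : T * T | [&& p.1 \in R, p.2 \in C & is_self_entry (hH p.1 p.2)]]|
    = #|R|.

Definition assoc_subnetwork (B : {set T} * {set T}) : {set T} := B.1.

End Network.

(* Main.v *)
Require Import Defs.
From mathcomp Require Import all_boot.
From mathcomp Require Import boolp zify.
Set Implicit Arguments. Unset Strict Implicit. Unset Printing Implicit Defensive.

Lemma count1_uniq (X : eqType) (a : pred X) (s : seq X) x0 i j :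
  count a s = 1 -> i < size s -> j < size s -> a (nth x0 s i) -> a (nth x0 s j) -> i = j.
Proof.
move=> c1.
wlog lt_ij : i j / i < j.
  move=> H hi hj ai aj; case: (ltngtP i j) => [h|h|//].
  - exact: H. - by symmetry; apply: H.
move=> hi hj ai aj; exfalso.
have : 0 < count a (take j s).
  rewrite -has_count; apply/(has_nthP x0); exists i.
    by rewrite size_take hj.
  by rewrite nth_take.
move=> h2; move: c1; rewrite -[in count a s](cat_take_drop j s) count_cat (drop_nth x0 hj) /= aj.
lia.
Qed.

Lemma upath_of_connect (T : finType) (r : rel T) x y : connect r x y ->
  exists p, [/\ path r x p, uniq (x :: p) & last x p = y].
Proof.
move/connectP=> [p hp ->]; case: (shortenP hp) => p' h1 h2 _; by exists p'.
Qed.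

Lemma next_last_head (T : eqType) (x : T) s : uniq (x :: s) -> next (x :: s) (last x s) = x.
Proof.
move=> u; rewrite next_nth mem_last index_last //= nth_default //.
Qed.

Lemma next_notin (T : eqType) (c : seq T) x : x \notin c -> next c x = x.
Proof. by move=> h; rewrite next_nth (negbTE h). Qed.

Section Pf.
Variables (T : finType) (e : rel T) (n : nat) (iota : 'I_n -> T) (o : T).
Hypothesis core : core_network e iota o.
Variable bs : seq ({set T} * {set T}).
Hypothesis FK : FK_decomposition e iota o bs.
Variable B : {set T} * {set T}.
Hypothesis B_in : B \in bs.
Hypothesis B_app : appendage_block e iota o B.1 B.2.

Local Notation hh := (hH e iota o).
Definition x0b : {set T} * {set T} := (set0, set0).
Definition rho (r : T) := find (fun b : {set T} * {set T} => r \in b.1) bs.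
Definition gam (c : T) := find (fun b : {set T} * {set T} => c \in b.2) bs.

Lemma rho_lt r : rho r < size bs.
Proof. case: FK => F1 _ _ _; by rewrite /rho -has_find has_count F1. Qed.
Lemma gam_lt r : gam r < size bs.
Proof. case: FK => _ F1 _ _; by rewrite /gam -has_find has_count F1. Qed.
Lemma rho_mem r : r \in (nth x0b bs (rho r)).1.
Proof. case: FK => F1 _ _ _.
  apply: (nth_find x0b (a := fun b : {set T} * {set T} => r \in b.1)); by rewrite has_count F1. Qed.
Lemma gam_mem r : r \in (nth x0b bs (gam r)).2.
Proof. case: FK => _ F1 _ _.
  apply: (nth_find x0b (a := fun b : {set T} * {set T} => r \in b.2)); by rewrite has_count F1. Qed.
Lemma rho_uniq r i : i < size bs -> r \in (nth x0b bs i).1 -> rho r = i.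
Proof. case: FK => F1 _ _ _ hi hr.
  exact (count1_uniq (a := fun b : {set T} * {set T} => r \in b.1) (F1 r) (rho_lt r) hi (rho_mem r) hr). Qed.
Lemma gam_uniq r i : i < size bs -> r \in (nth x0b bs i).2 -> gam r = i.
Proof. case: FK => _ F1 _ _ hi hr.
  exact (count1_uniq (a := fun b : {set T} * {set T} => r \in b.2) (F1 r) (gam_lt r) hi (gam_mem r) hr). Qed.

Lemma rho_le_gam r c : nonzero (hh r c) -> rho r <= gam c.
Proof.
case: FK => _ _ _ F4 nz; rewrite leqNgt; apply/negP => lt.
by move: nz; rewrite (F4 (rho r) (gam c) _ r c (rho_mem r) (gam_mem c)) // lt rho_lt.
Qed.

Lemma sum_rho : \sum_r rho r = \sum_(i < size bs) #|(nth x0b bs i).1| * i.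
Proof.
under [RHS]eq_bigr do rewrite -sum_nat_const.
under [RHS]eq_bigr do rewrite big_mkcond /=.
rewrite exchange_big /=; apply: eq_bigr => r _.
rewrite (bigD1 (Ordinal (rho_lt r))) //= rho_mem big1 ?addn0 // => i ne.
case: ifP => // hr; move: ne; by rewrite -val_eqE /= (rho_uniq (ltn_ord i) hr) eqxx.
Qed.

Lemma sum_gam : \sum_r gam r = \sum_(i < size bs) #|(nth x0b bs i).2| * i.
Proof.
under [RHS]eq_bigr do rewrite -sum_nat_const.
under [RHS]eq_bigr do rewrite big_mkcond /=.
rewrite exchange_big /=; apply: eq_bigr => r _.
rewrite (bigD1 (Ordinal (gam_lt r))) //= gam_mem big1 ?addn0 // => i ne.
case: ifP => // hr; move: ne; by rewrite -val_eqE /= (gam_uniq (ltn_ord i) hr) eqxx.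
Qed.

Lemma sum_eq : \sum_r rho r = \sum_r gam r.
Proof.
rewrite sum_rho sum_gam; apply: eq_bigr => i _; congr (_ * _).
case: FK => _ _ F3 _; by case: (F3 _ (mem_nth x0b (ltn_ord i))).
Qed.

Lemma matching_blocks (sg : T -> T) : injective sg ->
  (forall c, nonzero (hh (sg c) c)) -> forall c, rho (sg c) = gam c.
Proof.
move=> inj nz.
have le c : rho (sg c) <= gam c := rho_le_gam (nz c).
have eqs : \sum_c rho (sg c) = \sum_c gam c.
  by rewrite -sum_eq (reindex_inj inj (P := xpredT) (F := rho)).
move=> c; apply/eqP; rewrite eqn_leq le /= leqNgt; apply/negP => lt.
move: eqs; rewrite (bigD1 c) //= [X in _ = X](bigD1 c) //=.
have := @leq_sum _ (index_enum T) (fun i => i != c) (fun i => rho (sg i)) gam (fun i _ => le i). lia.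
Qed.

Lemma self_hH r c : is_self_entry (hh r c) = (c != o) && (r == c).
Proof.
rewrite /hH; case: (c =P o) => [->|_] /=; first by case: pickP.
case: (r =P c) => [->|ne] /=; first by rewrite eqxx.
by case: (e c r) => //=; apply/eqP.
Qed.

Lemma nz_hH r c : c != o -> (r == c) || e c r -> nonzero (hh r c).
Proof. by move=> h1 h2; rewrite /hH (negbTE h1) h2. Qed.

Lemma nz_hH_o m : nonzero (hh (iota m) o).
Proof. rewrite /hH eqxx; case: pickP => // /(_ m); by rewrite eqxx. Qed.

Lemma hH_nz_edge r c : c != o -> nonzero (hh r c) -> (r == c) || e c r.
Proof. by move=> h; rewrite /hH (negbTE h); case: ifP. Qed.

Definition K := B.1.

Lemma B12 : B.1 = B.2 /\ o \notin B.1.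
Proof.
case: B_app => _ hc.
case: FK => _ _ F3 _; case: (F3 _ B_in) => cardRC _ _ _.
set P := [set p : T * T | _] in hc.
have eP : P = [set (r, r) | r in (B.1 :&: B.2) :\ o].
  apply/setP => [[r c]]; rewrite !inE /= self_hH.
  apply/idP/imsetP.
  - case/and4P => h1 h2 h3 /eqP h4; subst c; exists r => //.
    by rewrite !inE h1 h2 h3.
  - case=> x; rewrite !inE => /and3P[h1 h2 h3] [-> ->].
    by rewrite h1 h2 h3 eqxx.
have inj : injective (fun r : T => (r, r)) by move=> x y [].
move: hc; rewrite eP (card_imset _ inj) => hc.
have eq1 : (B.1 :&: B.2) :\ o = B.1.
  apply/eqP; rewrite eqEcard hc leqnn andbT.
  by apply: subset_trans (subsetDl _ _) (subsetIl _ _).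
have sub : B.1 \subset B.2.
  by apply/subsetP => x; rewrite -{1}eq1 !inE => /and3P[].
split.
  by apply/eqP; rewrite eqEcard sub cardRC leqnn.
by apply/negP; rewrite -{1}eq1 !inE eqxx.
Qed.

Definition i0 := index B bs.
Lemma i0_lt : i0 < size bs. Proof. by rewrite /i0 index_mem. Qed.
Lemma nth_i0 : nth x0b bs i0 = B. Proof. by rewrite nth_index. Qed.

Lemma inK_rho x : (x \in K) = (rho x == i0).
Proof.
apply/idP/eqP => [h|h].
  by apply: rho_uniq i0_lt _; rewrite nth_i0.
by have := rho_mem x; rewrite h nth_i0.
Qed.

Lemma inK_gam x : (x \in K) = (gam x == i0).
Proof.
rewrite /K (proj1 B12).
apply/idP/eqP => [h|h].
  by apply: gam_uniq i0_lt _; rewrite nth_i0.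
by have := gam_mem x; rewrite h nth_i0.
Qed.

Lemma oK : o \notin K. Proof. exact: (proj2 B12). Qed.

Lemma matchK (sg : T -> T) : injective sg ->
  (forall c, nonzero (hh (sg c) c)) -> forall c, (sg c \in K) = (c \in K).
Proof. by move=> inj nz c; rewrite inK_rho inK_gam (matching_blocks inj nz). Qed.

Lemma perm_lemma m s q :
  simple_path e iota o m s -> cycle e q -> uniq q ->
  (forall x, x \in q -> x \notin iota m :: s) ->
  (forall x, x \in iota m :: s -> (next (iota m :: s) x \in K) = (x \in K)) /\
  (forall x, x \in q -> (next q x \in K) = (x \in K)).
Proof.
case/and3P=> hp /eqP hl up cq uq dis.
set p := iota m :: s.
pose sg x := if x \in p then next p x else next q x.
have notp y : y \notin p -> next q y \notin p.
  move=> yp; case: (boolP (y \in q)) => yq.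
    by apply: dis; rewrite mem_next.
  by rewrite next_notin.
have inj : injective sg.
  move=> x y; rewrite /sg; case: ifP => xp; case: ifP => yp.
  - exact: (can_inj (prev_next up)).
  - by move=> h; have := notp _ (negbT yp); rewrite -h mem_next xp.
  - by move=> h; have := notp _ (negbT xp); rewrite h mem_next yp.
  - exact: (can_inj (prev_next uq)).
have op : o \in p by rewrite -hl mem_last.
have nz c : nonzero (hh (sg c) c).
  rewrite /sg; case: ifP => cp.
    case: (c =P o) => [->|/eqP co].
      by rewrite -{2}hl next_last_head // nz_hH_o.
    pose e' := fun a b => e a b || (a == o) && (b == iota m).
    have cp' : cycle e' p.
      rewrite /= rcons_path hl /e' eqxx eqxx orbT andbT.
      by apply: sub_path hp => a b ->.
    have := next_cycle cp' cp; rewrite /e' (negbTE co) /= orbF => h.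
    by apply: nz_hH => //; rewrite h orbT.
  have co : c != o by apply/eqP => h; rewrite h op in cp.
  case: (boolP (c \in q)) => cq'.
    by apply: nz_hH => //; rewrite next_cycle // orbT.
  by rewrite next_notin //; apply: nz_hH => //; rewrite eqxx.
have mK := matchK inj nz.
split=> x hx.
  by have := mK x; rewrite /sg hx.
have xp : x \notin p by apply: dis.
by have := mK x; rewrite /sg (negbTE xp).
Qed.

Lemma path_notK m s x : simple_path e iota o m s -> x \in iota m :: s -> x \notin K.
Proof.
move=> sp hx.
have /and3P[hp /eqP hl up] := sp.
have [hn _] := perm_lemma (q := [::]) sp erefl erefl (fun x (h : x \in [::]) => ltac:(by rewrite in_nil in h)).
set p := iota m :: s in hn hx up.
pose R := [rel a b : T | (a \in K) == (b \in K)].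
have tR : transitive R by move=> a b c /= /eqP -> /eqP ->.
have cn := cycle_next up.
have pf : path (frel (next p)) (iota m) s.
  by move: cn; rewrite /= rcons_path => /andP[].
have pR : path R (iota m) s.
  apply: (sub_in_path (P := mem p) _ _ pf).
    move=> a b ap bp /= /eqP <-; by rewrite hn // eqxx.
  by apply/allP.
have aR := order_path_min tR pR.
have Rx y : y \in p -> R (iota m) y.
  rewrite inE => /orP[/eqP ->|ys]; first by rewrite /= eqxx.
  exact: (allP aR).
have := Rx o; rewrite -{1}hl mem_last => /(_ isT) /= /eqP.
have := Rx x hx => /= /eqP <-.
by move=> ->; rewrite (negbTE oK).
Qed.

Lemma path_subZ (Z : {set T}) x p : path (sub_rel e Z) x p -> last x p \in Z ->
  all (mem Z) (x :: p).
Proof.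
elim: p x => [|y p IH] x /=; first by rewrite andbT.
case/andP=> /and3P[_ xZ _] hp hl; rewrite -/(all (mem Z) (y :: p)) /= xZ; exact: IH hp hl.
Qed.

Lemma PL m s (Z : {set T}) a b : simple_path e iota o m s ->
  (forall v, v \in Z -> v \notin iota m :: s) ->
  e a b -> a \in Z -> connect (sub_rel e Z) b a -> (a \in K) = (b \in K).
Proof.
move=> sp dis eab aZ /upath_of_connect [p' [hp up hl]].
set q := b :: p'.
have allZ := path_subZ hp; rewrite hl in allZ; have {}allZ := allZ aZ.
have cq : cycle e q.
  rewrite /= rcons_path hl eab andbT.
  by apply: sub_path hp => x y /and3P[].
have dq x : x \in q -> x \notin iota m :: s.
  by move=> h; apply: dis; apply: (allP allZ).
have [_ hq] := perm_lemma sp cq up dq.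
have := hq a; rewrite -{1 2}hl next_last_head // mem_last => /(_ isT).
by move=> ->.
Qed.

Lemma Wlem m s (Z : {set T}) x y : simple_path e iota o m s ->
  (forall v, v \in Z -> v \notin iota m :: s) ->
  connect (sub_rel e Z) x y -> connect (sub_rel e Z) y x -> x \in K -> y \in K.
Proof.
move=> sp dis /connectP [w hw ->].
elim: w x hw => [|z w IH] x //= /andP[sxz hw] hyx xK.
have [exz xZ zZ] : [/\ e x z, x \in Z & z \in Z] by case/and3P: sxz.
have czx : connect (sub_rel e Z) z x.
  apply: connect_trans hyx; apply/connectP; by exists w.
have := PL sp dis exz xZ czx; rewrite xK => zK.
apply: IH hw _ _ => //.
apply: connect_trans hyx (connect1 _); done.
Qed.

Lemma ex_simple m : exists s, simple_path e iota o m s.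
Proof.
have [h _] := core (iota m).
have [s [hp us hl]] := upath_of_connect h.
by exists s; rewrite /simple_path hp hl eqxx us.
Qed.

Lemma K_not_simple m x : x \in K -> ~ simple_node e iota o m x.
Proof. by move=> xK [s [sp hx]]; have := path_notK sp hx; rewrite xK. Qed.

Lemma conZ r a b : ~~ connect e r b -> connect e a b ->
  connect (sub_rel e [set v | ~~ connect e r v]) a b.
Proof.
move=> nb /connectP [p hp eb]; rewrite eb in nb *; clear eb.
elim: p a hp nb => [|c p IH] a //= /andP[eac hp] nb.
have nc : ~~ connect e r c.
  apply: contra nb => h; apply: connect_trans h _; apply/connectP; by exists p.
have na : ~~ connect e r a.
  apply: contra nc => h; exact: connect_trans h (connect1 eac).
apply: connect_trans (connect1 _) (IH _ hp nb).
by rewrite /sub_rel /= eac !inE na nc.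
Qed.

Lemma back_edge m' u y : path e (iota m') u -> uniq (iota m' :: u) ->
  last (iota m') u = y -> ~ simple_node e iota o m' y ->
  exists2 k, k < size u & connect e y (nth (iota m') (iota m' :: u) k).
Proof.
move=> hp up hl nsy.
case: (boolP [exists k : 'I_(size u), connect e y (nth (iota m') (iota m' :: u) k)]).
  by case/existsP => k hk; exists k.
move/existsPn => hno; exfalso; apply: nsy.
have [hy _] := core y.
have [w [hw uw hlw]] := upath_of_connect hy.
exists (u ++ w); split; last first.
  by rewrite /on_path -cat_cons mem_cat -hl mem_last.
rewrite /simple_path cat_path hl hw last_cat hl hlw eqxx hp /=. rewrite -/(uniq (iota m' :: u ++ w)).
rewrite -cat_cons cat_uniq up.
move: uw => /= /andP[yw uw]; rewrite uw andbT.
apply/hasPn => v vw; apply/negP => vin.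
have cyv : connect e y v by apply: (path_connect hw); rewrite inE vw orbT.
have := index_mem v (iota m' :: u); rewrite vin -[size (_ :: _)]/(size u).+1 ltnS leq_eqVlt => /orP[/eqP hi|hi].
  have : v = y by rewrite -(nth_index (iota m') vin) hi -hl (last_nth (iota m')).
  by move=> vy; move: yw; rewrite -vy vw.
by have := hno (Ordinal hi); rewrite /= nth_index // cyv.
Qed.

Lemma K_down m x : x \in K -> connect e (iota m) x.
Proof.
move=> xK; case: (boolP (connect e (iota m) x)) => // nc; exfalso.
have [_ [m' hm']] := core x.
have [u [hp up hl]] := upath_of_connect hm'.
have [s0 sp0] := ex_simple m.
set Z := [set v | ~~ connect e (iota m) v].
have dis v : v \in Z -> v \notin iota m :: s0.
  rewrite inE; apply: contra => h.
  by case/and3P: sp0 => hp0 _ _; apply: (path_connect hp0).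
have nil_case : iota m' \notin K.
  have [s1 sp1] := ex_simple m'.
  by apply: (path_notK sp1); rewrite mem_head.
suff main : forall k u0 y, size u0 <= k -> y \in K -> ~~ connect e (iota m) y ->
    path e (iota m') u0 -> uniq (iota m' :: u0) -> last (iota m') u0 = y -> False.
  exact: main (leqnn _) xK nc hp up hl.
elim=> [|k IH] u0 y hs yK ny hp0 up0 hl0.
  by case: u0 hs hp0 up0 hl0 => // _ _ _ /= hy; move: nil_case; rewrite hy yK.
case: u0 hs hp0 up0 hl0 => [|a u1] hs hp0 up0 hl0.
  by rewrite /= in hl0; move: nil_case; rewrite hl0 yK.
set u0 := a :: u1 in hs hp0 up0 hl0.
have [k' hk' cyz] := back_edge hp0 up0 hl0 (K_not_simple (m:=m') yK).
set z := nth (iota m') (iota m' :: u0) k' in cyz.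
have czy : connect e z y.
  move: hp0; rewrite -(cat_take_drop k' u0) cat_path => /andP[_ hd].
  have lz : last (iota m') (take k' u0) = z.
    by rewrite (last_nth (iota m')) size_take hk' -[iota m' :: _]/(take k'.+1 (iota m' :: u0)) nth_take.
  rewrite lz in hd; apply: (path_connect hd).
  by rewrite -hl0 -{1}(cat_take_drop k' u0) last_cat lz mem_last.
have nz : ~~ connect e (iota m) z.
  by apply: contra ny => h; apply: connect_trans h czy.
have zK : z \in K.
  apply: (Wlem sp0 dis _ _ yK); apply: conZ => //.
apply: (IH (take k' u0) z _ zK nz).
- rewrite size_take hk'; move: hs hk'; rewrite /u0 /=; clear; move=> h1 h2; lia.
- exact: take_path.
- by rewrite -[iota m' :: _]/(take k'.+1 (iota m' :: u0)) take_uniq.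
- by rewrite (last_nth (iota m')) size_take hk' -[iota m' :: _]/(take k'.+1 (iota m' :: u0)) nth_take.
Qed.

Lemma K_strong a b : a \in K -> b \in K -> connect (sub_rel e K) a b.
Proof.
move=> aK bK.
set U := [set v in K | connect (sub_rel e K) a v].
suff : K \subset U by move/subsetP/(_ b bK); rewrite inE => /andP[].
apply/negPn/negP => nsub.
case: FK => _ _ F3 _; case: (F3 _ B_in) => _ _ _ F4.
rewrite -(proj1 B12) -/K in F4.
have aU : a \in U by rewrite inE aK connect0.
have UK : U \subset K by apply/subsetP => v; rewrite inE => /andP[].
have cK := cardsID U K.
have eKU : K :&: U = U by apply/setIidPr.
rewrite eKU in cK.
have U0 : 0 < #|U| by apply/card_gt0P; exists a.
have D0 : 0 < #|K :\: U|.
  apply/card_gt0P; move/subsetPn: nsub => [v vK vU]; exists v; by rewrite inE vU vK.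
have [r [c [rD cU nz]]] : exists r c, [/\ r \in K :\: U, c \in U & nonzero (hh r c)].
  apply: F4; [exact: subsetDl | exact: UK | | ].
  - by rewrite D0 /=; lia.
  - by lia.
have cK' : c \in K by move/subsetP: UK; apply.
have co : c != o by apply/eqP => h; move: oK; rewrite -h cK'.
have := hH_nz_edge co nz.
move: rD; rewrite in_setD => /andP[rU rK].
case/orP => [/eqP rc | ecr].
  by move: rU; rewrite rc cU.
move: cU; rewrite inE => /andP[_ cac].
move: rU; rewrite inE rK /=; apply/negP/negPn.
apply: connect_trans cac (connect1 _).
by rewrite /sub_rel /= ecr cK' rK.
Qed.

End Pf.

Theorem theorem3p13 (T : finType) (e : rel T) (n : nat) (iota : 'I_n -> T)
    (o : T)
    (iota_inj : injective iota) (iota_neq_o : forall m, iota m != o)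
    (core : core_network e iota o)
    (bs : seq ({set T} * {set T})) (FK : FK_decomposition e iota o bs)
    (B : {set T} * {set T}) (B_in : B \in bs)
    (B_app : appendage_block e iota o B.1 B.2) :
  let K := assoc_subnetwork B in
  [/\ (* (a) *)
      forall x, x \in K -> absolutely_appendage e iota o x,
      (* (b) *)
      forall (m : 'I_n) (s : seq T), simple_path e iota o m s ->
        forall x y, x \in K -> y \in CS iota m s -> y \notin K ->
          ~ path_equiv e (CS iota m s) x y
    & (* (c) *)
      path_component e (AG e iota o) K].
Proof.
move=> K0.
have eK : K0 = K B by [].
have partA : forall x, x \in K0 -> absolutely_appendage e iota o x.
  move=> x xK m; split.
    exact: (K_down core FK B_in B_app m).
  exact: (K_not_simple FK B_in B_app).
split => //.
- move=> m s sp x y xK yC yK [xC _ cxy cyx].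
  have dis v : v \in CS iota m s -> v \notin iota m :: s by rewrite inE.
  by move: yK; rewrite (Wlem FK B_in B_app sp dis cxy cyx xK).
- have [_ _ F3 _] := FK; case: (F3 _ B_in) => _ pos _ _.
  have [a aK] : exists a, a \in K0 by apply/card_gt0P.
  have aAG : forall v, v \in K0 -> v \in AG e iota o.
    by move=> v vK; rewrite inE; apply/asboolP; apply: partA.
  exists a; first exact: aAG.
  apply/setP => b; rewrite inE; apply/idP/asboolP => [bK|].
    split; try exact: aAG.
    + apply: connect_sub (K_strong FK B_in B_app aK bK) => x y /and3P[exy xK yK].
      by apply: connect1; rewrite /sub_rel /= exy !aAG.
    + apply: connect_sub (K_strong FK B_in B_app bK aK) => x y /and3P[exy xK yK].
      by apply: connect1; rewrite /sub_rel /= exy !aAG.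
  case=> _ bA cab cba.
  have [m _] := (core a).2.
  have [s sp] := ex_simple core m.
  have dis v : v \in AG e iota o -> v \notin iota m :: s.
    rewrite inE => /asboolP /(_ m) [_ ns]; apply/negP => h; apply: ns.
    by exists s.
  exact: (Wlem FK B_in B_app sp dis cab cba aK).
Qed.
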